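(* Let $b_x,b_y,u_x,u_y,K$ be positive constants with $u_y>u_x$ and $b_x\geq b_y$, let $h>0$, and consider the discrete system \[ X_{n+1}=\frac{X_n(1+hb_x)}{1+h\left(\frac{b_x}{K}X_n+\frac{b_x}{K}Y_n+u_x\right)},\qquad Y_{n+1}=\frac{Y_n(1+hb_y)}{1+h\left(\frac{b_y}{K}X_n+\frac{b_y}{K}Y_n+u_y\right)} . \] Let $\bar X=K(1-u_x/b_x)$ and $\bar Y=K(1-u_y/b_y)$. Then, for every $h>0$: (i) the system is locally asymptotically stable around $E_0^V=(0,0)$ if $b_x<u_x$ and $b_y<u_y$; (ii) the system is locally asymptotically stable around $E_1^V=(\bar X,0)$ if $b_x>u_x$ and $\frac{b_y}{u_y}<\frac{b_x}{u_x}$; (iii) the fixed point $E_2^V=(0,\bar Y)$ is always unstable.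
   Context: This is a nonstandard finite-difference discretization (step size $h$) of a host–parasite model with perfect vertical transmission and no horizontal transmission; $X,Y$ are uninfected and infected host densities, $b_x,b_y$ birth rates, $u_x,u_y$ death rates, $K$ carrying capacity. The paper assumes throughout that $u_y>u_x$ and $b_x\geq b_y$. A fixed point of the map is called (locally asymptotically) stable if both eigenvalues of the Jacobian of the map at the fixed point have modulus strictly less than $1$, and unstable otherwise. *)

(* Defs.v *)
From HB Require Import structures.
From mathcomp Require Import all_boot all_order all_algebra.
From mathcomp Require Import complex.
From mathcomp Require Import all_classical all_reals all_analysis.
Set Implicit Arguments. Unset Strict Implicit. Unset Printing Implicit Defensive.
Import Order.TTheory GRing.Theory Num.Theory.
Local Open Scope ring_scope.

Definition nsfd_map {R : realType} (h bx by_ ux uy K : R) (p : R * R) : R * R :=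
  let X := p.1 in let Y := p.2 in
  (X * (1 + h * bx) / (1 + h * (bx / K * X + bx / K * Y + ux)),
   Y * (1 + h * by_) / (1 + h * (by_ / K * X + by_ / K * Y + uy))).

Definition coord2 {R : realType} (i : 'I_2) (p : R * R) : R :=
  if i == ord0 then p.1 else p.2.

Definition upd2 {R : realType} (j : 'I_2) (p : R * R) (t : R) : R * R :=
  if j == ord0 then (t, p.2) else (p.1, t).

Definition jacobian2 {R : realType} (F : R * R -> R * R) (p : R * R) : 'M[R]_2 :=
  \matrix_(i < 2, j < 2) derive1 (fun t => coord2 i (F (upd2 j p t))) (coord2 j p).

Definition is_eigenvalue {R : realType} (n : nat) (A : 'M[R]_n) (z : R[i]) : Prop :=
  root (map_poly (fun x : R => (x%:C)%C) (char_poly A)) z.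

(* A fixed point p of F is (locally asymptotically) stable if all eigenvalues of
   the Jacobian at p have modulus < 1; unstable otherwise. *)
Definition fp_stable {R : realType} (F : R * R -> R * R) (p : R * R) : Prop :=
  forall z : R[i], is_eigenvalue (jacobian2 F p) z -> `|z| < 1.

Definition fp_unstable {R : realType} (F : R * R -> R * R) (p : R * R) : Prop :=
  ~ fp_stable F p.

(* Main.v *)
From HB Require Import structures.
From mathcomp Require Import all_boot all_order all_algebra.
From mathcomp Require Import complex.
From mathcomp Require Import ring lra.
From mathcomp Require Import all_classical all_reals all_analysis.
Require Import Defs.
Import Order.TTheory GRing.Theory Num.Theory.
Local Open Scope ring_scope.

Lemma der_rat (R : realType) (A B C t0 : R) : B + C*t0 != 0 ->
  derive1 (fun t => t * A / (B + C* t)) t0 = A/(B+C*t0) - t0*A*C/(B+C*t0)^+2.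
Proof.
move=> nz; rewrite derive1E.
have d1 : is_derive t0 (1:R) (fun t : R => t * A) A.
  have := is_deriveM (is_derive_id t0 (1:R)) (is_derive_cst A t0 (1:R)).
  by rewrite /= scaler0 add0r /cst scaler1.
have d2 : is_derive t0 (1:R) (fun t : R => B + C * t) C.
  have := is_deriveD (is_derive_cst B t0 (1:R)) (is_deriveM (is_derive_cst C t0 (1:R)) (is_derive_id t0 (1:R))).
  by rewrite /= scaler0 addr0 /cst scaler1 add0r.
have e : (fun t => t * A / (B + C* t)) = (fun t : R => t * A) * (fun t => (B + C* t)^-1) by [].
have dd2 : derivable (fun t : R => B + C* t) t0 1 by apply: ex_derive; exact: d2.
rewrite e deriveM //. all: try (by apply: derivableV).
rewrite (deriveV (f:=fun t : R => B + C* t)) //.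
rewrite !derive_val /=.
rewrite /GRing.scale /=.
field; exact: nz.
Qed.

Lemma char_poly_tr (R : comNzRingType) n (A : 'M[R]_n) : char_poly A^T = char_poly A.
Proof.
rewrite /char_poly -det_tr; congr (\det _); apply/matrixP => i j; rewrite !mxE eq_sym.
by [].
Qed.

Lemma char_poly22 (R : comNzRingType) (A : 'M[R]_2) : (A 0 1 = 0 \/ A 1 0 = 0) ->
  char_poly A = ('X - (A 0 0)%:P) * ('X - (A 1 1)%:P).
Proof.
have H : forall B : 'M[R]_2, B 0 1 = 0 -> char_poly B = ('X - (B 0 0)%:P) * ('X - (B 1 1)%:P).
  move=> B hB; rewrite char_poly_trig; last first.
    apply/is_trig_mxP => i j; case: i => [[|[|//]] ?]; case: j => [[|[|//]] ?] //= _.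
    rewrite -hB; congr (B _ _); exact: val_inj.
  have e0 : widen_ord (leqnSn 1) (@ord_max 0) = 0 :> 'I_2 by apply: val_inj.
  have e1 : (@ord_max 1) = 1 :> 'I_2 by apply: val_inj.
  by rewrite !big_ord_recr big_ord0 /= mul1r e0 e1.
case=> h; first exact: H.
by rewrite -char_poly_tr H ?mxE.
Qed.

Lemma eig22 (R : realType) (A : 'M[R]_2) z : (A 0 1 = 0 \/ A 1 0 = 0) ->
  is_eigenvalue A z <-> (z = ((A 0 0)%:C)%C \/ z = ((A 1 1)%:C)%C).
Proof.
move=> h; rewrite /is_eigenvalue char_poly22 //.
rewrite rmorphM /= !map_polyXsubC /= rootM !root_XsubC.
by split => [/orP[]/eqP|[]->]; [left|right|rewrite eqxx|rewrite eqxx orbT].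
Qed.

Lemma normC_lt1 (R : realType) (a : R) : (`|(a%:C)%C| < 1) = (`|a| < 1).
Proof.
rewrite normc_def /= expr0n /= addr0 sqrtr_sqr.
by rewrite -ltcR.
Qed.

Section J.
Variables (R : realType) (h bx by_ ux uy K : R) (p : R * R).
Let F := nsfd_map h bx by_ ux uy K.

Lemma J00 : jacobian2 F p 0 0 = derive1 (fun t => t * (1 + h*bx) / ((1 + h*(bx/K* p.2 + ux)) + (h*(bx/K))* t)) p.1.
Proof.
rewrite /jacobian2 mxE /coord2 /upd2 /=. congr derive1; apply/funext => t; congr (_ / _); ring.
Qed.
Lemma J11 : jacobian2 F p 1 1 = derive1 (fun t => t * (1 + h*by_) / ((1 + h*(by_/K* p.1 + uy)) + (h*(by_/K))* t)) p.2.
Proof.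
rewrite /jacobian2 mxE /coord2 /upd2 /=. congr derive1; apply/funext => t; congr (_ / _); ring.
Qed.
Lemma J01 : p.1 = 0 -> jacobian2 F p 0 1 = 0.
Proof.
move=> e; rewrite /jacobian2 mxE /coord2 /upd2 /= e.
have -> : (fun t : R => 0 * (1 + h * bx) / (1 + h * (bx / K * 0 + bx / K * t + ux))) = cst 0.
  by apply/funext => t; rewrite !mul0r.
exact: derive1_cst.
Qed.
Lemma J10 : p.2 = 0 -> jacobian2 F p 1 0 = 0.
Proof.
move=> e; rewrite /jacobian2 mxE /coord2 /upd2 /= e.
have -> : (fun t : R => 0 * (1 + h * by_) / (1 + h * (by_ / K * t + by_ / K * 0 + uy))) = cst 0.
  by apply/funext => t; rewrite !mul0r.
exact: derive1_cst.
Qed.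
End J.

Lemma der_rat' (R : realType) (A B C t0 D v : R) : B + C*t0 = D -> D != 0 ->
  A/D - t0*A*C/D^+2 = v ->
  derive1 (fun t => t * A / (B + C*t)) t0 = v.
Proof. by move=> eD nz ev; rewrite der_rat eD //. Qed.

Lemma lt1 (R : realType) (A B : R) : 0 < A -> A < B -> `|A/B| < 1.
Proof.
move=> a0 ab; have b0 : 0 < B by apply: lt_trans ab.
by rewrite ger0_norm ?divr_ge0 ?ltW // ltr_pdivrMr // mul1r.
Qed.

Lemma ge1 (R : realType) (A B : R) : 0 < B -> B <= A -> 1 <= `|A/B|.
Proof.
move=> b0 ab; have a0 : 0 < A by apply: lt_le_trans ab.
rewrite ger0_norm; last by rewrite divr_ge0 // ltW.
by rewrite ler_pdivlMr // mul1r.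
Qed.

Lemma stab_tri (R : realType) (F : R * R -> R * R) (p : R * R) :
  (jacobian2 F p 0 1 = 0 \/ jacobian2 F p 1 0 = 0) ->
  `|jacobian2 F p 0 0| < 1 -> `|jacobian2 F p 1 1| < 1 -> fp_stable F p.
Proof.
move=> ht h0 h1 z /(@eig22 _ _ _ ht) [] ->; by rewrite normC_lt1.
Qed.

Lemma unstab_tri (R : realType) (F : R * R -> R * R) (p : R * R) i :
  (jacobian2 F p 0 1 = 0 \/ jacobian2 F p 1 0 = 0) -> (i = 0 \/ i = 1) ->
  1 <= `|jacobian2 F p i i| -> fp_unstable F p.
Proof.
move=> ht hi hge hs.
have := hs ((jacobian2 F p i i)%:C)%C.
rewrite normC_lt1 ltNge hge => H; apply: notF; apply: H.
by apply/(@eig22 _ _ _ ht); case: hi => ->; [left|right].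
Qed.

Theorem theorem6 (R : realType) (bx by_ ux uy K h : R) :
  0 < bx -> 0 < by_ -> 0 < ux -> 0 < uy -> 0 < K ->
  ux < uy -> by_ <= bx -> 0 < h ->
  let F := nsfd_map h bx by_ ux uy K in
  let Xbar := K * (1 - ux / bx) in
  let Ybar := K * (1 - uy / by_) in
  ((bx < ux -> by_ < uy -> fp_stable F (0, 0)) /\
   (ux < bx -> by_ / uy < bx / ux -> fp_stable F (Xbar, 0)) /\
   fp_unstable F (0, Ybar)).
Proof.
move=> bx0 by0 ux0 uy0 K0 uxy byx h0 F Xbar Ybar.
have bxn : bx != 0 by rewrite gt_eqF.
have byn : by_ != 0 by rewrite gt_eqF.
have Kn : K != 0 by rewrite gt_eqF.
have hbx : 0 < 1 + h*bx by nra.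
have hby : 0 < 1 + h*by_ by nra.
have hux : 0 < 1 + h*ux by nra.
have huy : 0 < 1 + h*uy by nra.
split; [|split].
- move=> h1 h2; apply: stab_tri; first by left; rewrite J01.
  + rewrite J00 /= (@der_rat' _ _ _ _ _ (1 + h*ux) ((1 + h*bx)/(1 + h*ux))).
    * apply: lt1 => //; nra.
    * by rewrite !(mulr0, addr0, add0r).
    * by rewrite gt_eqF.
    * by rewrite !(mul0r, subr0).
  + rewrite J11 /= (@der_rat' _ _ _ _ _ (1 + h*uy) ((1 + h*by_)/(1 + h*uy))).
    * apply: lt1 => //; nra.
    * by rewrite !(mulr0, addr0, add0r).
    * by rewrite gt_eqF.
    * by rewrite !(mul0r, subr0).
- move=> h1 h2; apply: stab_tri; first by right; rewrite J10.
  + rewrite J00 /= (@der_rat' _ _ _ _ _ (1 + h*bx) (1 - h*(bx-ux)/(1 + h*bx))).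
    * have q0 : 0 < h*(bx-ux)/(1 + h*bx) by apply: divr_gt0 => //; nra.
      have q2 : h*(bx-ux)/(1 + h*bx) < 2 by rewrite ltr_pdivrMr //; nra.
      rewrite ltr_norml; apply/andP; split; lra.
    * rewrite /Xbar; field; exact/andP.
    * by rewrite gt_eqF.
    * rewrite /Xbar; field; rewrite ?gt_eqF //.
  + have h2' : by_ * ux < bx * uy.
      by move: h2; rewrite ltr_pdivrMr // mulrAC ltr_pdivlMr.
    set w := by_ * ux / bx.
    have w1 : w < uy by rewrite /w ltr_pdivrMr //; nra.
    have w2 : w < by_ by rewrite /w ltr_pdivrMr //; nra.
    rewrite J11 /= (@der_rat' _ _ _ _ _ (1 + h*(by_ - w + uy)) ((1 + h*by_)/(1 + h*(by_ - w + uy)))).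
    * apply: lt1 => //; nra.
    * rewrite /Xbar /w; field; exact/andP.
    * rewrite gt_eqF //; nra.
    * by rewrite !(mul0r, subr0).
- have ht : jacobian2 F (0, Ybar) 0 1 = 0 \/ jacobian2 F (0, Ybar) 1 0 = 0 by left; rewrite J01.
  have [h1|h1] := ltP by_ uy.
  + apply: (@unstab_tri _ _ _ 1) => //; first by right.
    rewrite J11 /= (@der_rat' _ _ _ _ _ (1 + h*by_) ((1 + h*uy)/(1 + h*by_))).
    * apply: ge1 => //; nra.
    * rewrite /Ybar; field; exact/andP.
    * by rewrite gt_eqF.
    * rewrite /Ybar; field; rewrite ?gt_eqF //.
  + set w := bx * uy / by_.
    have w1 : uy <= w by rewrite /w ler_pdivlMr //; nra.
    have w2 : w <= bx by rewrite /w ler_pdivrMr //; nra.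
    apply: (@unstab_tri _ _ _ 0) => //; first by left.
    rewrite J00 /= (@der_rat' _ _ _ _ _ (1 + h*(bx - w + ux)) ((1 + h*bx)/(1 + h*(bx - w + ux)))).
    * apply: ge1; nra.
    * rewrite /Ybar /w; field; exact/andP.
    * rewrite gt_eqF //; nra.
    * by rewrite !(mul0r, subr0).
Qed.
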